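(* (Reliability of ensemble-based SpikeCP with p-variable merging.) Let $(\mathbf{x},c),(\mathbf{x}[1],c[1]),\dots,(\mathbf{x}[n],c[n])$ be i.i.d. pairs (input time series, label in $\{1,\dots,C\}$). Let $s^1,\dots,s^K$ be $K$ fixed loss functions (chosen independently of these data), $s^k_{c'}(\mathbf{x}^t)\in\mathbb{R}$. Fix a set of checkpoints $\mathcal{T}_s\subseteq\{1,\dots,T\}$ with $T\in\mathcal{T}_s$, a target accuracy $p_{\rm targ}\in(0,1)$, a set-size threshold $I_{\rm th}$, and set $\alpha=(1-p_{\rm targ})/|\mathcal{T}_s|$. For each $t\in\mathcal{T}_s$, $k$ and label $c'$ define $$p^k_{c'}(\mathbf{x}^t)=\frac{1+\sum_{i=1}^{n}\mathbb{1}\big(s^k_{c'}(\mathbf{x}^t)\le s^k_{c[i]}(\mathbf{x}^t[i])\big)}{n+1},\qquad p_{c'}(\mathbf{x}^t)=F\big(p^1_{c'}(\mathbf{x}^t),\dots,p^K_{c'}(\mathbf{x}^t)\big),$$ where $F$ is any p-merging function, and $\Gamma(\mathbf{x}^t)=\{c'\in\{1,\dots,C\}: p_{c'}(\mathbf{x}^t)>\alpha\}$. Let $T_s(\mathbf{x})=\min\{t\in\mathcal{T}_s: |\Gamma(\mathbf{x}^t)|\le I_{\rm th}\}$ if this set is nonempty and $T_s(\mathbf{x})=T$ otherwise, and output $\Gamma(\mathbf{x}):=\Gamma(\mathbf{x}^{T_s(\mathbf{x})})$. Then $\Pr\big(c\in\Gamma(\mathbf{x})\big)\ge p_{\rm targ}$,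 where the probability is over the test pair and the calibration data.
   Context: $\mathbf{x}^t=(\mathbf{x}_1,\dots,\mathbf{x}_t)$ denotes the prefix up to time $t$ of the time series $\mathbf{x}$. A function $F:[0,1]^K\to[0,\infty)$ is a p-merging function if for any random variables $P^1,\dots,P^K$ (with arbitrary dependence) each satisfying $\Pr(P^k\le\alpha')\le\alpha'$ for all $\alpha'\in(0,1)$, one has $\Pr(F(P^1,\dots,P^K)\le\alpha')\le\alpha'$ for all $\alpha'\in(0,1)$. Examples: $F(p^1,\dots,p^K)=K\min_k p^k$, $F=\max_k p^k$, and more generally $F(p^1,\dots,p^K)=a_r\big(\frac1K\sum_k (p^k)^r\big)^{1/r}$ with suitable constants $a_r$ (e.g. $a_r=K^{1/r}$ for $r\ge K-1$). In the paper the $s^k$ are log-losses of $K$ pre-trained spiking neural networks forming an ensemble (deep ensemble or samples from a variational posterior drawn independently of the data). *)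

(* Defs.v *)
From HB Require Import structures.
From mathcomp Require Import all_boot all_order all_algebra.
From mathcomp Require Import all_classical all_reals all_analysis.
Set Implicit Arguments. Unset Strict Implicit. Unset Printing Implicit Defensive.
Import Order.TTheory GRing.Theory Num.Theory.
Local Open Scope classical_set_scope.
Local Open Scope ring_scope.

Definition is_pmerging (R : realType) (K : nat) (F : ('I_K -> R) -> R) : Prop :=
  forall (d : measure_display) (Om : measurableType d) (P : probability Om R)
         (Pk : 'I_K -> Om -> R),
    (forall k, measurable_fun setT (Pk k)) ->
    (forall k w, 0 <= Pk k w <= 1) ->
    (forall k (a : R), 0 < a < 1 -> (P [set w | (Pk k w <= a)%R] <= a%:E)%E) ->
    forall a : R, 0 < a < 1 -> (P [set w | (F (fun k => Pk k w) <= a)%R] <= a%:E)%E.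

(* The pairs (Xs i, Cs i), i : 'I_m, are i.i.d. random elements of
   (T.-tuple X) x 'I_C : each is measurable, and for every family of
   measurable rectangles A_i x B_i (which generate the product sigma-algebra),
   P(/\_i {(X_i,C_i) in A_i x B_i}) = prod_i P((X_0,C_0) in A_i x B_i)
   (independence + identical distribution). *)
Definition iid_pairs (R : realType) (d : measure_display) (Om : measurableType d)
    (P : probability Om R) (dX : measure_display) (X : measurableType dX)
    (T C m : nat) (Xs : 'I_m.+1 -> Om -> T.-tuple X) (Cs : 'I_m.+1 -> Om -> 'I_C) : Prop :=
  (forall i, measurable_fun setT (Xs i)) /\
  (forall i (c : 'I_C), measurable (Cs i @^-1` [set c])) /\
  (forall (A : 'I_m.+1 -> set (T.-tuple X)) (B : 'I_m.+1 -> set 'I_C),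
     (forall i, measurable (A i)) ->
     P (\bigcap_(i in [set: 'I_m.+1]) [set w | A i (Xs i w) /\ B i (Cs i w)])
     = (\prod_(i < m.+1) P [set w | A i (Xs ord0 w) /\ B i (Cs ord0 w)])%E).

Section SpikeCP.
Variables (R : realType) (dX : measure_display) (X : measurableType dX)
  (T C K n : nat) (s : 'I_K -> 'I_C -> seq X -> R).

Definition pval (k : 'I_K) (c' : 'I_C) (t : nat) (x : T.-tuple X)
    (xs : 'I_n -> T.-tuple X) (cs : 'I_n -> 'I_C) : R :=
  (1 + #|[set i : 'I_n | s k c' (take t x) <= s k (cs i) (take t (xs i))]|)%:R
  / n.+1%:R.

Definition Gamma (F : ('I_K -> R) -> R) (alpha : R) (t : nat) (x : T.-tuple X)
    (xs : 'I_n -> T.-tuple X) (cs : 'I_n -> 'I_C) : {set 'I_C} :=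
  [set c' : 'I_C | alpha < F (fun k => pval k c' t x xs cs)].

Definition stop_time (F : ('I_K -> R) -> R) (alpha : R) (Ts : {set 'I_T.+1})
    (Ith : nat) (x : T.-tuple X) (xs : 'I_n -> T.-tuple X) (cs : 'I_n -> 'I_C)
    : 'I_T.+1 :=
  let A := [set t in Ts | #|Gamma F alpha t x xs cs| <= Ith]%N in
  if [pick t in A] is Some t0 then [arg min_(t < t0 in A) (t : nat)] else ord_max.

Definition spikecp_set (F : ('I_K -> R) -> R) (alpha : R) (Ts : {set 'I_T.+1})
    (Ith : nat) (x : T.-tuple X) (xs : 'I_n -> T.-tuple X) (cs : 'I_n -> 'I_C)
    : {set 'I_C} :=
  Gamma F alpha (stop_time F alpha Ts Ith x xs cs) x xs cs.

End SpikeCP.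

(* Main.v *)
Require Import Defs.
From HB Require Import structures.
From mathcomp Require Import all_boot all_order all_algebra.
From mathcomp Require Import all_classical all_reals all_analysis.
From mathcomp Require Import measurable_realfun.
From mathcomp Require Import ring lra.
Import Order.TTheory GRing.Theory Num.Theory.
Local Open Scope classical_set_scope.
Local Open Scope ring_scope.
Lemma atom_meas d (T : measurableType d) (L : finType) (E : L -> set T) (Q : set T) :
  (forall l, measurable (E l)) ->
  (forall w w', (forall l, E l w <-> E l w') -> Q w -> Q w') -> measurable Q.
Proof.
move=> mE HQ.
have -> : Q = \bigcup_(b in [set b : {ffun L -> bool} | exists w, Q w /\ forall l, E l w <-> b l])
   \bigcap_(l in [set: L]) (if b l then E l else ~` E l).
  apply/seteqP; split.
  - move=> w Qw; exists [ffun l => `[< E l w >]].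
      exists w; split => // l1; rewrite ffunE.
      by split => [?|]; [exact/asboolP|move/asboolP].
    move=> l2 _; rewrite ffunE; case: asboolP => //.
  - move=> w [b [w0 [Qw0 Hw0]] Hw]; apply: (HQ w0) => // l3.
    have := Hw l3 I; rewrite Hw0; case: (b l3) => /=; first by split.
    by move=> nE; split => // /nE.
apply: fin_bigcup_measurable; first exact: finite_finset.
move=> b _; apply: fin_bigcap_measurable; first exact: finite_finset.
by move=> l _; case: (b l) => //; exact: measurableC.
Qed.

Lemma count_bound (R : realType) (N : nat) (S : 'I_N -> R) (b : R) : 0 <= b ->
  (#|[set j | (#|[set i | S j <= S i]|)%:R <= b]|)%:R <= b.
Proof.
move=> b0; set J := [set j | _].
have [j0 j0J|J0] := pickP (mem J); last first.
  by rewrite (eq_card0 J0).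
have [j jJ jmin] := Order.TotalTheory.arg_minP S (P := mem J) j0J.
apply: le_trans (_ : (#|[set i | S j <= S i]|)%:R <= b); last first.
  by move: jJ; rewrite /= in_setE.
rewrite ler_nat; apply: subset_leq_card; apply/fintype.subsetP => i iJ.
by rewrite in_setE; apply: jmin.
Qed.

Section Int.
Context d (T : measurableType d) (R : realType) (P : probability T R).

Lemma mindE (A : set T) : measurable A ->
  measurable_fun [set: T] (EFin \o (\1_A : T -> R)).
Proof. by move=> mA; apply/measurable_EFinP; exact: measurable_indic. Qed.

Lemma sum_meas_int (I : finType) (E : I -> set T) :
 (forall j, measurable (E j)) ->
 (\sum_j P (E j) = \int[P]_x (\sum_j \1_(E j) x : R)%:E)%E.
Proof.
move=> mE.
under eq_integral do rewrite -sumEFin.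
rewrite ge0_integral_sum //.
  by apply: eq_bigr => j _; rewrite integral_indic // setIT.
all: first [by move=> j; apply: mindE | by move=> j x _; rewrite lee_fin indic_ge0].
Qed.

Lemma sum_meas_le (I : finType) (E : I -> set T) (b : R) :
 (forall j, measurable (E j)) ->
 (forall w, \sum_j (\1_(E j) w : R) <= b) -> (\sum_j P (E j) <= b%:E)%E.
Proof.
move=> mE Hb; rewrite sum_meas_int //.
apply: le_trans (_ : (\int[P]_x (cst b%:E x) <= _)%E).
  apply: ge0_le_integral => //.
  all: try (apply/measurable_EFinP; apply: measurable_sum => j; exact: measurable_indic).
  all: try (by move=> x _; rewrite lee_fin sumr_ge0 // => j _; rewrite indic_ge0).
  all: try (by move=> x _; rewrite lee_fin).
rewrite integral_cst //; set u := (X in (_ * X <= _)%E).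
have -> : u = 1%E by exact: probability_setT.
by rewrite mule1.
Qed.

Lemma union_bound (I : finType) (E : I -> set T) (A : set T) :
 (forall j, measurable (E j)) -> measurable A ->
 (forall w, A w -> exists j, E j w) -> (P A <= \sum_j P (E j))%E.
Proof.
move=> mE mA HA; rewrite sum_meas_int //.
have -> : P A = (\int[P]_x (\1_A x : R)%:E)%E by rewrite integral_indic // setIT.
apply: ge0_le_integral => //.
all: try exact: mindE.
all: try (apply/measurable_EFinP; apply: measurable_sum => j; exact: measurable_indic).
all: try (by move=> x _; rewrite lee_fin indic_ge0).
move=> x _; rewrite lee_fin.
have [Ax|nAx] := pselect (A x); last first.
  by rewrite indicE memNset // sumr_ge0 // => j _; rewrite indic_ge0.
have [j Ej] := HA x Ax.
rewrite (bigD1 j) //= indicE mem_set // indicE mem_set //.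
by rewrite lerDl sumr_ge0 // => i _; rewrite indic_ge0.
Qed.
End Int.

Lemma card_inj (N : nat) (f : 'I_N -> 'I_N) (Q : 'I_N -> bool) : injective f ->
  #|[set i | Q (f i)]| = #|[set i | Q i]|.
Proof.
move=> finj; rewrite -!sum1_card [RHS](reindex_inj finj) /=.
by apply: eq_bigl => i; apply/idP/idP => /set_mem H; apply/mem_set.
Qed.

Section Exch.
Context (R : realType) d (Om : measurableType d) (P : probability Om R)
  dX (X : measurableType dX) (T C m : nat)
  (Xs : 'I_m.+1 -> Om -> T.-tuple X) (Cs : 'I_m.+1 -> Om -> 'I_C)
  (h : 'I_C -> T.-tuple X -> R).
Hypotheses (iid : iid_pairs P Xs Cs) (hm : forall c, measurable_fun setT (h c)).

Definition Y0 := 'I_m.+1 -> (T.-tuple X * option 'I_C).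
Definition rect (A_ : 'I_m.+1 -> set (T.-tuple X)) (B_ : 'I_m.+1 -> set (option 'I_C))
  : set Y0 := [set y | forall i, A_ i (y i).1 /\ B_ i (y i).2].
Definition G : set (set Y0) := [set A | exists A_ B_, (forall i, measurable (A_ i)) /\ A = rect A_ B_].
Definition Yt := g_sigma_algebraType G.

Lemma G_meas (A : set Yt) : G A -> measurable A.
Proof. by move=> GA; apply: sub_sigma_algebra. Qed.

Lemma coord_meas i (A : set (T.-tuple X)) (B : set (option 'I_C)) : measurable A ->
  measurable ([set y : Yt | A (y i).1 /\ B (y i).2]).
Proof.
move=> mA; apply: G_meas.
exists (fun j => if j == i then A else setT), (fun j => if j == i then B else setT); split.
  by move=> j; case: ifP.
apply/seteqP; split => y.
  by move=> [Ay By] j; case: ifP => [/eqP->|]//.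
by move=> /(_ i); rewrite eqxx.
Qed.

Definition fy i (y : Yt) : R :=
  match (y i).2 with Some c => h c (y i).1 | None => 0 end.

Lemma fy_meas i : measurable_fun setT (fy i).
Proof.
move=> _ B mB; rewrite setTI.
pose g (o : option 'I_C) x := match o with Some c => h c x | None => 0 end.
have gm o : measurable_fun setT (g o) by case: o => [c|]; [exact: hm|exact: measurable_cst].
have -> : fy i @^-1` B = \bigcup_(o in [set: option 'I_C])
    [set y : Yt | (g o @^-1` B) (y i).1 /\ [set o] (y i).2].
  apply/seteqP; split => y.
    by move=> yB; exists (y i).2 => //.
  by case=> o0 _ [gB /= Ho]; rewrite /preimage /= /fy Ho.
apply: fin_bigcup_measurable; first exact: finite_finset.
move=> o _; apply: coord_meas.
by have := gm o measurableT B mB; rewrite setTI.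
Qed.

Lemma le_meas i j : measurable [set y : Yt | fy i y <= fy j y].
Proof.
have mt : measurable [set true] by [].
have := measurable_realfun.measurable_fun_ler (fy_meas i) (fy_meas j) measurableT mt.
by rewrite setTI.
Qed.

Definition Phi (Xs' : 'I_m.+1 -> Om -> T.-tuple X) (Cs' : 'I_m.+1 -> Om -> 'I_C)
  (w : Om) : Yt := fun i => (Xs' i w, Some (Cs' i w)).

Lemma Phi_meas Xs' Cs' : (forall i, measurable_fun setT (Xs' i)) ->
  (forall i c, measurable (Cs' i @^-1` [set c])) -> measurable_fun setT (Phi Xs' Cs').
Proof.
move=> mX mC; apply: (@measurability _ _ Om Yt setT (Phi Xs' Cs') G) => //.
move=> _ [A [A_ [B_ [mA ->]]] <-]; rewrite setTI.
have -> : Phi Xs' Cs' @^-1` rect A_ B_ = \bigcap_(i in [set: 'I_m.+1])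
   ((Xs' i @^-1` A_ i) `&` \bigcup_(c in [set c | B_ i (Some c)]) (Cs' i @^-1` [set c])).
  apply/seteqP; split => w.
    by move=> H i _; have [HA HB] := H i; split => //; exists (Cs' i w).
  move=> H i; have [HA [c Hc /= Hc']] := H i I; split => //.
  by rewrite /= Hc'.
apply: fin_bigcap_measurable; first exact: finite_finset.
move=> i _; apply: measurableI.
  by have := mX i measurableT (A_ i) (mA i); rewrite setTI.
by apply: fin_bigcup_measurable; [exact: finite_finset|move=> c _; exact: mC].
Qed.


Definition Sc i w := h (Cs i w) (Xs i w).

Definition swap (j i : 'I_m.+1) : 'I_m.+1 :=
  if i == ord0 then j else if i == j then ord0 else i.

Lemma swapK j : involutive (swap j).
Proof.
move=> i; rewrite /swap.
have [->|i0] := eqVneq i ord0; first by case: eqVneq => [->|]; rewrite ?eqxx.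
have [->|ij] := eqVneq i j; first by rewrite eqxx.
by rewrite (negPf i0) (negPf ij).
Qed.

Lemma swap_inj j : injective (swap j).
Proof. exact: (inv_inj (swapK j)). Qed.

Definition Ehat j (b : R) : set Yt := [set y | (#|[set i | fy j y <= fy i y]|)%:R <= b].

Lemma Ehat_meas j b : measurable (Ehat j b).
Proof.
apply: (@atom_meas _ Yt 'I_m.+1 (fun l => [set y : Yt | fy j y <= fy l y])).
  by move=> l; exact: le_meas.
move=> y y' Hy; rewrite /Ehat /=.
suff -> : [set i | fy j y' <= fy i y'] = [set i | fy j y <= fy i y] by [].
by apply/seteqP; split => i /= /Hy.
Qed.

Lemma rect_prod (A_ : 'I_m.+1 -> set (T.-tuple X)) B_ : (forall i, measurable (A_ i)) ->
  P (Phi Xs Cs @^-1` rect A_ B_) =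
  (\prod_(i < m.+1) P [set w | A_ i (Xs ord0 w) /\ B_ i (Some (Cs ord0 w))])%E.
Proof.
move=> mA; have [_ [_ Hp]] := iid.
rewrite -(Hp A_ (fun i c => B_ i (Some c)) mA); congr (P _).
apply/seteqP; split => w.
  by move=> H i _; exact: H.
by move=> H i; exact: H.
Qed.

Lemma pf_eq (Xs' : 'I_m.+1 -> Om -> T.-tuple X) (Cs' : 'I_m.+1 -> Om -> 'I_C) :
  (forall i, measurable_fun setT (Xs' i)) ->
  (forall i c, measurable (Cs' i @^-1` [set c])) ->
  (forall A_ B_, (forall i, measurable (A_ i)) ->
     P (Phi Xs Cs @^-1` rect A_ B_) = P (Phi Xs' Cs' @^-1` rect A_ B_)) ->
  forall A : set Yt, measurable A -> P (Phi Xs Cs @^-1` A) = P (Phi Xs' Cs' @^-1` A).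
Proof.
move=> mX' mC' Hr A mA.
have [mX [mC _]] := iid.
have mf1 : measurable_fun setT (Phi Xs Cs) by apply: Phi_meas.
have mf2 : measurable_fun setT (Phi Xs' Cs') by apply: Phi_meas.
have := @measure_unique _ R Yt G (fun=> setT) erefl _ _ _
   (pushforward P (Phi Xs Cs)) (pushforward P (Phi Xs' Cs')) _ _ A mA.
apply.
- move=> _ _ [A1 [B1 [mA1 ->]]] [A2 [B2 [mA2 ->]]].
  exists (fun i => A1 i `&` A2 i), (fun i => B1 i `&` B2 i); split.
    by move=> i; exact: measurableI.
  apply/seteqP; split => y.
    by move=> [H1 H2] i; have [? ?] := H1 i; have [? ?] := H2 i.
  by move=> H; split => i; have [[? ?] [? ?]] := H i.
- move=> _; exists (fun=> setT), (fun=> setT); split => //.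
  by apply/seteqP; split => y.
- by apply/seteqP; split => // y _; exists 0%N.
- by move=> A0 [A_ [B_ [mA_ ->]]]; exact: Hr.
- move=> _; change (P (Phi Xs Cs @^-1` [set: Yt]) < +oo)%E; rewrite preimage_setT.
  by apply: (le_lt_trans (probability_le1 P measurableT)); exact: ltey.
Unshelve.
all: try exact: mf1.
all: try exact: mf2.
Qed.

Lemma exch j b : P (Phi Xs Cs @^-1` Ehat ord0 b) = P (Phi Xs Cs @^-1` Ehat j b).
Proof.
have [mX [mC Hp]] := iid.
pose Xs' i := Xs (swap j i); pose Cs' i := Cs (swap j i).
rewrite (@pf_eq Xs' Cs').
- have sj : swap j ord0 = j by rewrite /swap eqxx.
  congr (P _); apply/seteqP; split => w; rewrite /preimage /Ehat /fy /Phi /= /Xs' /Cs' sj;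
  by have := @card_inj _ (swap j) (fun i => h (Cs j w) (Xs j w) <= h (Cs i w) (Xs i w)) (swap_inj j) => /= ->.
- by move=> i; exact: mX.
- by move=> i c; exact: mC.
- move=> A_ B_ mA; rewrite rect_prod //.
  have -> : Phi Xs' Cs' @^-1` rect A_ B_ = Phi Xs Cs @^-1` rect (A_ \o swap j) (B_ \o swap j).
    apply/seteqP; split => w H i.
      by have := H (swap j i); rewrite /Phi /Xs' /Cs' /= swapK.
    by have := H (swap j i); rewrite /Phi /Xs' /Cs' /= swapK.
  rewrite rect_prod; last by move=> i; exact: mA.
  by rewrite [LHS](reindex_inj (swap_inj j)).
- exact: Ehat_meas.
Qed.

Lemma conf_valid (a : R) : 0 <= a ->
  (P [set w | ((#|[set i | Sc ord0 w <= Sc i w]|)%:R <= a * m.+1%:R)%R] <= a%:E)%E.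
Proof.
move=> a0; set b := a * m.+1%:R.
have [mX [mC Hp]] := iid.
have mf : measurable_fun setT (Phi Xs Cs) by apply: Phi_meas.
pose E j := Phi Xs Cs @^-1` Ehat j b.
have mE j : measurable (E j).
  by have := mf measurableT (Ehat j b) (Ehat_meas j b); rewrite setTI.
have Hs : (\sum_j P (E j) <= b%:E)%E.
  apply: sum_meas_le => // w.
  have -> : \sum_j (\1_(E j) w : R) =
      (#|[set j | (#|[set i | Sc j w <= Sc i w]|)%:R <= b]|)%:R.
    rewrite -sum1_card natr_sum [RHS]big_mkcond /=; apply: eq_bigr => j _.
    rewrite indicE.
    have -> : (w \in E j) = (j \in [set j | (#|[set i | Sc j w <= Sc i w]|)%:R <= b]).
      by apply/idP/idP => /set_mem H; apply/mem_set.
    by case: (_ \in _).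
  by apply: count_bound; rewrite mulr_ge0.
have Heq j : P (E j) = P (E ord0) by rewrite /E (exch j).
have HS : (\sum_j P (E j) = P (E ord0) *+ m.+1)%E.
  by rewrite (eq_bigr _ (fun j _ => Heq j)) sumr_const card_ord.
move: Hs; rewrite HS.
rewrite [X in (P X <= _)%E]( _ : _ = E ord0); last first.
  by apply/seteqP; split => w H; exact: H.
have h1 : (P (E ord0) <= 1)%E := probability_le1 P (mE ord0).
have h0 : (0 <= P (E ord0))%E := measure_ge0 P (E ord0).
have fin : P (E ord0) \is a fin_num.
  by rewrite ge0_fin_numE // (le_lt_trans h1) // ltey.
rewrite -(fineK fin) -EFin_natmul !lee_fin /b -(mulr_natr (fine (P (E ord0)))).
by rewrite ler_pM2r // ltr0Sn.
Qed.

End Exch.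

Lemma mem_cset (I : Type) (Q : I -> bool) x : (x \in [set y | Q y]) = Q x.
Proof. by apply/idP/idP => [/set_mem|/mem_set]. Qed.

Lemma card_lift (n : nat) (Q : 'I_n.+1 -> bool) :
  #|[set i : 'I_n.+1 | Q i]| = (Q ord0 + #|[set i : 'I_n | Q (lift ord0 i)]|)%N.
Proof.
rewrite -!sum1_card !big_mkcond big_ord_recl /= mem_cset; congr addn.
rewrite [RHS]big_mkcond; apply: eq_bigr => i _; by rewrite !mem_cset.
Qed.

Lemma Gamma_ext (R : realType) dX (X : measurableType dX) (T C K n : nat)
  (s : 'I_K -> 'I_C -> seq X -> R) F alpha (x x' : T.-tuple X) (xs xs' : 'I_n -> T.-tuple X) (cs cs' : 'I_n -> 'I_C) :
  (forall k c' (t : 'I_T.+1), pval s k c' t x xs cs = pval s k c' t x' xs' cs') ->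
  forall t : 'I_T.+1, Gamma s F alpha t x xs cs = Gamma s F alpha t x' xs' cs'.
Proof.
move=> H t; apply/setP => c; rewrite !inE.
by have -> : (fun k => pval s k c t x xs cs) = (fun k => pval s k c t x' xs' cs')
  by apply/funext => k; exact: H.
Qed.

Lemma spike_ext (R : realType) dX (X : measurableType dX) (T C K n : nat)
  (s : 'I_K -> 'I_C -> seq X -> R) F alpha Ts Ith (x x' : T.-tuple X) (xs xs' : 'I_n -> T.-tuple X) (cs cs' : 'I_n -> 'I_C) :
  (forall k c' (t : 'I_T.+1), pval s k c' t x xs cs = pval s k c' t x' xs' cs') ->
  spikecp_set s F alpha Ts Ith x xs cs = spikecp_set s F alpha Ts Ith x' xs' cs'.
Proof.
move=> H; have HG := @Gamma_ext _ _ _ _ _ _ _ s F alpha _ _ _ _ _ _ H.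
rewrite /spikecp_set /stop_time.
have -> : [set t in Ts | (#|Gamma s F alpha t x xs cs| <= Ith)%N] =
          [set t in Ts | (#|Gamma s F alpha t x' xs' cs'| <= Ith)%N].
  by apply/setP => t; rewrite !inE HG.
by case: pickP => [t0 _|_]; rewrite HG.
Qed.

Lemma stop_in (R : realType) dX (X : measurableType dX) (T C K n : nat)
  (s : 'I_K -> 'I_C -> seq X -> R) F alpha (Ts : {set 'I_T.+1}) (Ith : nat) (x : T.-tuple X) (xs : 'I_n -> T.-tuple X) (cs : 'I_n -> 'I_C) :
  ord_max \in Ts -> stop_time s F alpha Ts Ith x xs cs \in Ts.
Proof.
move=> HT; rewrite /stop_time; case: pickP => [t0 Ht0|//].
case: arg_minnP => // t; rewrite inE => /andP[] //.
Qed.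

Lemma mfun_case d (Om : measurableType d) (R : realType) (C : nat)
  (f : Om -> 'I_C) (g : 'I_C -> Om -> R) :
  (forall c, measurable (f @^-1` [set c])) -> (forall c, measurable_fun setT (g c)) ->
  measurable_fun setT (fun w => g (f w) w).
Proof.
move=> mf mg _ B mB; rewrite setTI.
have -> : (fun w => g (f w) w) @^-1` B =
    \bigcup_(c in [set: 'I_C]) (f @^-1` [set c] `&` g c @^-1` B).
  apply/seteqP; split => w; first by move=> Hw; exists (f w).
  by case=> c _ [/= -> ?].
apply: fin_bigcup_measurable; first exact: finite_finset.
move=> c _; apply: measurableI => //.
by have := mg c measurableT B mB; rewrite setTI.
Qed.

Theorem mainTheorem2 (R : realType) (d : measure_display) (Om : measurableType d)
  (P : probability Om R) (dX : measure_display) (X : measurableType dX)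
  (T C K n : nat)
  (Xs : 'I_n.+1 -> Om -> T.-tuple X) (Cs : 'I_n.+1 -> Om -> 'I_C)
  (s : 'I_K -> 'I_C -> seq X -> R)
  (F : ('I_K -> R) -> R) (Ts : {set 'I_T.+1}) (ptarg : R) (Ith : nat) :
  iid_pairs P Xs Cs ->
  (forall k c (t : nat), measurable_fun setT (fun x : T.-tuple X => s k c (take t x))) ->
  is_pmerging F ->
  (forall t, t \in Ts -> (0 < (t : nat))%N) ->
  ord_max \in Ts ->
  0 < ptarg < 1 ->
  let alpha := (1 - ptarg) / #|Ts|%:R in
  (ptarg%:E <=
   P [set w | Cs ord0 w \in
        spikecp_set s F alpha Ts Ith (Xs ord0 w)
          (fun i => Xs (lift ord0 i) w) (fun i => Cs (lift ord0 i) w)])%E.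
Proof.
move=> iid hs pm Tpos HT /andP[pt0 pt1]; cbv zeta; set alpha := (1 - ptarg) / _.
have [mX [mC Hp]] := iid.
pose pv k c (t : nat) w := pval s k c t (Xs ord0 w)
  (fun i => Xs (lift ord0 i) w) (fun i => Cs (lift ord0 i) w).
pose L := ((('I_K * 'I_C) * 'I_T.+1) * 'I_n + 'I_C)%type.
pose E : L -> set Om := fun l => match l with
  | inl (((k, c), t), i) => [set w | s k c (take t (Xs ord0 w)) <=
        s k (Cs (lift ord0 i) w) (take t (Xs (lift ord0 i) w))]
  | inr c => Cs ord0 @^-1` [set c] end.
have mE l : measurable (E l).
  case: l => [[[[k c] t] i]|c] /=; last exact: mC.
  have m1 : measurable_fun setT (fun w => s k c (take t (Xs ord0 w))).
    exact: measurableT_comp (hs k c t) (mX ord0).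
  have m2 : measurable_fun setT
      (fun w => s k (Cs (lift ord0 i) w) (take t (Xs (lift ord0 i) w))).
    apply: (@mfun_case _ _ _ _ (Cs (lift ord0 i))
       (fun c w => s k c (take t (Xs (lift ord0 i) w)))) => // c'.
    exact: measurableT_comp (hs k c' t) (mX _).
  have mt : measurable [set true] by [].
  by have := measurable_realfun.measurable_fun_ler m1 m2 measurableT mt; rewrite setTI.
have inv w w' : (forall l, E l w <-> E l w') ->
    (forall k c (t : 'I_T.+1), pv k c t w = pv k c t w') /\ Cs ord0 w = Cs ord0 w'.
  move=> HE; split.
    move=> k c t; rewrite /pv /pval; congr ((1 + _)%:R / _).
    apply: eq_card => i; rewrite !mem_cset.
    have := HE (inl (((k, c), t), i)); rewrite /E /=; case=> H1 H2.
    by apply/idP/idP; [exact: H1|exact: H2].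
  have := HE (inr (Cs ord0 w)); rewrite /E /preimage /=; case=> H1 _.
  exact/esym/H1.
have mQ (Q : set Om) : (forall w w', (forall k c (t : 'I_T.+1), pv k c t w = pv k c t w') ->
    Cs ord0 w = Cs ord0 w' -> Q w -> Q w') -> measurable Q.
  move=> HQ; apply: (@atom_meas _ _ _ E Q mE) => w w' HE.
  by have [H1 H2] := inv w w' HE; apply: HQ.
have pv_meas k (t : 'I_T.+1) : measurable_fun setT (fun w => pv k (Cs ord0 w) t w).
  move=> _ B mB; rewrite setTI; apply: mQ => w w' H1 H2.
  by rewrite /preimage /= -H2 -H1.
have pv_01 k c t w : 0 <= pv k c t w <= 1.
  rewrite /pv /pval divr_ge0 ?ler0n //= ler_pdivrMr ?ltr0Sn // mul1r ler_nat add1n ltnS.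
  by apply: leq_trans (max_card _) _; rewrite card_ord.
have pv_su k (t : 'I_T.+1) (a : R) : 0 < a < 1 -> (P [set w | (pv k (Cs ord0 w) t w <= a)%R] <= a%:E)%E.
  move=> /andP[a0 a1].
  apply: le_trans (@conf_valid R d Om P dX X T C n Xs Cs (fun c x => s k c (take t x))
     iid (fun c => hs k c t) a (ltW a0)).
  rewrite le_eqVlt; apply/orP; left; apply/eqP; congr (P _).
  apply/seteqP; split => w; rewrite /mkset; cbv beta;
  rewrite /pv /pval ler_pdivrMr ?ltr0Sn // card_lift /Sc lexx //.
have cT : 1 <= #|Ts|%:R :> R.
  by rewrite ler1n card_gt0; apply/set0Pn; exists ord_max.
have al0 : 0 < alpha by rewrite /alpha divr_gt0 ?subr_gt0 // (lt_le_trans ltr01).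
have al1 : alpha < 1.
  rewrite /alpha ltr_pdivrMr ?(lt_le_trans ltr01) // mul1r.
  by apply: lt_le_trans cT; rewrite ltrBlDr ltrDl.
have Hm (t : 'I_T.+1) :
    (P [set w | (F (fun k => pv k (Cs ord0 w) t w) <= alpha)%R] <= alpha%:E)%E.
  apply: (pm d Om P (fun k w => pv k (Cs ord0 w) t w)).
  - by move=> k; exact: pv_meas.
  - by move=> k w; exact: pv_01.
  - by move=> k a Ha; exact: pv_su.
  - by rewrite al0 al1.
set Tg := [set w | _].
have mTg : measurable Tg.
  apply: mQ => w w' H1 H2; rewrite /Tg /mkset; cbv beta.
  by rewrite -H2 -(@spike_ext _ _ _ _ _ _ _ s F alpha Ts Ith _ _ _ _ _ _ H1).
pose U (t : 'I_T.+1) := [set w | t \in Ts /\ (F (fun k => pv k (Cs ord0 w) t w) <= alpha)%R].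
have mU t : measurable (U t).
  apply: mQ => w w' H1 H2; rewrite /U /mkset; cbv beta; case=> Ht HF; split => //.
  rewrite -H2.
  have -> : (fun k => pv k (Cs ord0 w) t w') = (fun k => pv k (Cs ord0 w) t w).
    by apply/funext => k; rewrite H1.
  exact: HF.
have HU w : (~` Tg) w -> exists t, U t w.
  move=> nT; exists (stop_time s F alpha Ts Ith (Xs ord0 w)
    (fun i => Xs (lift ord0 i) w) (fun i => Cs (lift ord0 i) w)).
  split; first exact: stop_in.
  move: nT; rewrite /Tg /setC /mkset; cbv beta.
  by rewrite /spikecp_set /Gamma inE => /negP; rewrite -leNgt.
have Hb := @union_bound _ _ _ P _ U (~` Tg) mU (measurableC mTg) HU.
have Hs : (\sum_t P (U t) <= (1 - ptarg)%:E)%E.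
  apply: le_trans (_ : (\sum_(t < T.+1) (if t \in Ts then alpha%:E else 0%E) <= _)%E).
    apply: lee_sum => t _; case: ifP => tT.
      rewrite (_ : U t = [set w | (F (fun k => pv k (Cs ord0 w) t w) <= alpha)%R]);
        first exact: Hm.
      by apply/seteqP; split => w; rewrite /U /mkset; cbv beta; [case|move=> ?; split].
    rewrite (_ : U t = set0) ?measure0 //.
    by apply/seteqP; split => w //; rewrite /U /mkset; cbv beta; rewrite tT; case.
  rewrite -big_mkcond /= sumEFin sumr_const lee_fin -mulr_natl /alpha.
  by rewrite mulrC divfK // gt_eqF // (lt_le_trans ltr01).
have hC := probability_setC P mTg.
have fin : P Tg \is a fin_num.
  by rewrite ge0_fin_numE ?measure_ge0 // (le_lt_trans (probability_le1 P mTg)) // ltey.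
move: (le_trans Hb Hs); rewrite hC -(fineK fin) -EFinB !lee_fin => H.
lra.
Qed.
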